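(* In the setting described in the context, for all $h$ with $0<h<\varepsilon$, $h\le h_0$, and $c_2\varepsilon<\delta$ (where $c_2=\frac\pi2+c_1$), the discrete problem: find $u_h\in\widetilde V_h$ such that $a_h(u_h,v_h)=l_h(v_h)$ for all $v_h\in\widetilde V_h$, has a unique solution.
   Context: Let $n\in\{1,2\}$ and $\Gamma\subset\mathbb R^{n+1}$ a smooth, connected, compact, orientable hypersurface without boundary with unit outer normal $\nu$; let $\widehat p(x)=x-d(x)\nabla d(x)$ denote the closest point projection onto $\Gamma$, $d$ the signed distance function, defined on a neighbourhood of $\Gamma$. Tangential derivatives: $\nabla_\Gamma\eta=(\underline D_1\eta,\dots,\underline D_{n+1}\eta)=\nabla\bar\eta-(\nabla\bar\eta\cdot\nu)\nu$ for any extension $\bar\eta$. Coefficients: $a_{ij}\in C^2(\Gamma)$, $A=(a_{ij})$ symmetric, $\sum_{i,j}a_{ij}(x)\xi_i\nu_j(x)=0$ and $\sum_{i,j}a_{ij}(x)\xi_i\xi_j\ge\alpha|\xi|^2$ for all $\xi\in T_x\Gamma$ (some $\alpha>0$), and $A(x)\nu(x)=\nu(x)$; $a_0,f\in W^{1,\infty}(\Gamma)$ with $a_0\ge\alpha_0>0$. $\Omega$ is a bounded polyhedral open neighbourhood of $\Gamma$ on which $\widehat p$ is defined, $\phi:\overline\Omega\to\mathbb R$ smooth with $\Gamma=\{\phi=0\}$ and $c_0\le|\nabla\phi|\le c_1$ on $\overline\Omega$, $0<c_0\le c_1$; $U_r=\{x\in\Omega:|\phi(x)|<r\}$. $\delta>0$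 is such that for every $p\in\Gamma$ the ODE $\gamma_p'(s)=\frac{A(p)\nabla\phi(\gamma_p(s))}{A(p)\nabla\phi(\gamma_p(s))\cdot\nabla\phi(\gamma_p(s))}$, $\gamma_p(0)=p$, has a unique solution on $(-\delta,\delta)$ and $(p,s)\mapsto\gamma_p(s)$ is a bijection of $\Gamma\times(-\delta,\delta)$ onto $U_\delta$. Quadrature: an integer $q\ge0$ and a rule on the reference simplex with weights $\omega_i>0$, $\sum_{i=1}^L\omega_i=1$, points $\widehat b_i$, exact for polynomials of degree $\le q$; on a simplex $T$, $Q_T(g)=|T|\sum_{i=1}^L\omega_ig(b_{i,T})$, $b_{i,T}=\Phi_T(\widehat b_i)$ with $\Phi_T$ the affine map from the reference simplex onto $T$. $\sigma(r)=\cos^{2(q+1)}(r)$ for $|r|\le\pi/2$, $\sigma(r)=0$ otherwise; $\varrho(x)=\sigma(\phi(x)/\varepsilon)$. $\mathcal T_h$ is a regular simplicial partition of $\overline\Omega$ with mesh size $h$; $I_h$ is the Lagrange interpolation onto continuous piecewise affine functions on $\mathcal T_h$; $h_0>0$ is such that $\frac{c_0}{2}\le|\nabla I_h\phi|\le 2c_1$ on $\overline\Omega$ for all $h\in(0,h_0]$. For $h<\varepsilon$: $\widetilde{\mathcal T}_h=\{T\in\mathcal T_h:|\phi(b_{i,T})|\le\varepsilon\arccos(h/\varepsilon)\ \forall i\}$, $D_h=\bigcup_{T\in\widetilde{\mathcal T}_h}T$, $\widetilde V_h=\{v\in C(D_h): v \text{ affine on each } T\in\widetilde{\mathcal T}_h\}$.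 With $\widehat A=A\circ\widehat p$, $\widehat a_0=a_0\circ\widehat p$, $\widehat f=f\circ\widehat p$ (interpolated nodewise on $D_h$): $a_h(v_1,v_2)=\varepsilon^{-1}\sum_{T\in\widetilde{\mathcal T}_h}Q_T\bigl[\varrho\, I_h\widehat A\,\nabla v_1\cdot\nabla v_2+\varrho\, I_h\widehat a_0\,v_1v_2\bigr]\,|\nabla I_h\phi_{|T}|$ and $l_h(v)=\varepsilon^{-1}\sum_{T\in\widetilde{\mathcal T}_h}Q_T\bigl[\varrho\, I_h\widehat f\,v\bigr]\,|\nabla I_h\phi_{|T}|$. *)

(* Defs.v *)
From HB Require Import structures.
From mathcomp Require Import all_boot all_order all_algebra.
From mathcomp Require Import all_classical all_reals all_analysis.
Set Implicit Arguments. Unset Strict Implicit. Unset Printing Implicit Defensive.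
Import Order.TTheory GRing.Theory Num.Theory.
Import numFieldNormedType.Exports.
Local Open Scope classical_set_scope.
Local Open Scope ring_scope.

Section FEM.
Variables (R : realType) (n : nat).

Definition pt := 'rV[R]_(n.+1).

Definition dotv (u v : pt) : R := \sum_(i < n.+1) u 0 i * v 0 i.
Definition enorm (u : pt) : R := Num.sqrt (dotv u u).

Definition grad (g : pt -> R) (x : pt) : pt :=
  \row_(j < n.+1) ('D_(delta_mx 0 j : pt) g x).

Fixpoint Ck (k : nat) (U : set pt) (g : pt -> R) : Prop :=
  match k with
  | 0 => forall x, U x -> {for x, continuous g}
  | k'.+1 => (forall x, U x -> differentiable g x) /\
             forall v : pt, Ck k' U (fun x => 'D_v g x)
  end.

Definition smooth_on (U : set pt) (g : pt -> R) := forall k, Ck k U g.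

Definition Ck_on_set (k : nat) (G : set pt) (g : pt -> R) :=
  exists (U : set pt) (gbar : pt -> R),
    open U /\ G `<=` U /\ Ck k U gbar /\ forall x, G x -> gbar x = g x.

(* Lipschitz on G (= W^{1,oo}(G) on a smooth compact hypersurface) *)
Definition lipschitz_set (G : set pt) (g : pt -> R) :=
  exists k : R, forall x y, G x -> G y -> `|g x - g y| <= k * enorm (x - y).

Definition simplex := 'M[R]_(n.+2, n.+1).

Definition vert (T : simplex) (k : 'I_(n.+2)) : pt := row k T.

Definition shull (T : simplex) : set pt :=
  [set x | exists lam : 'rV[R]_(n.+2),
      (forall k, 0 <= lam 0 k) /\ \sum_k lam 0 k = 1 /\ x = lam *m T].

Definition edges (T : simplex) : 'M[R]_(n.+1) :=
  \matrix_(i < n.+1, j < n.+1) (T (lift ord0 i) j - T ord0 j).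

Definition nondeg (T : simplex) := \det (edges T) != 0.

Definition svol (T : simplex) : R := `|\det (edges T)| / (n.+1)`!%:R.

Definition sdiam (T : simplex) : R :=
  \big[Num.max/0]_(k < n.+2) \big[Num.max/0]_(l < n.+2) enorm (vert T k - vert T l).

(* gradient of the affine function on T with vertex values vals *)
Definition agrad (T : simplex) (vals : 'I_(n.+2) -> R) : pt :=
  (invmx (edges T) *m \col_(i < n.+1) (vals (lift ord0 i) - vals ord0))^T.

Definition partition_of (K : set pt) (M : seq simplex) :=
  (forall T, T \in M -> nondeg T) /\
  (forall x, K x <-> exists2 T, T \in M & shull T x) /\
  (forall i j, (i < size M)%N -> (j < size M)%N -> i <> j ->
     let T1 := nth 0 M i in let T2 := nth 0 M j in
     (exists k, forall l, vert T1 k <> vert T2 l) /\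
     (shull T1 `&` shull T2 =
        [set x | exists lam : 'rV[R]_(n.+2),
           (forall k, 0 <= lam 0 k) /\ \sum_k lam 0 k = 1 /\
           (forall k, (forall l, vert T1 k <> vert T2 l) -> lam 0 k = 0) /\
           x = lam *m T1])).

Definition meshsize (M : seq simplex) : R := \big[Num.max/0]_(T <- M) sdiam T.

Definition bary (b : pt) : 'rV[R]_(n.+2) :=
  \row_(k < n.+2) match unlift ord0 k with
                  | Some j => b 0 j
                  | None => 1 - \sum_(j < n.+1) b 0 j
                  end.

Definition qpoint (T : simplex) (b : pt) : pt := bary b *m T.

Definition ref_simplex (b : pt) := (forall j, 0 <= b 0 j) /\ \sum_j b 0 j <= 1.

(* exactness for polynomials of degree <= q:
   (1/|T^|) int_{T^} x^alpha = (n+1)! prod alpha_j! / (|alpha| + n + 1)! *)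
Definition quad_exact (q L : nat) (omega : 'I_L -> R) (bh : 'I_L -> pt) :=
  forall alpha : 'I_(n.+1) -> nat, (\sum_j alpha j <= q)%N ->
    \sum_(i < L) omega i * \prod_(j < n.+1) (bh i 0 j) ^+ alpha j =
    ((n.+1)`! * \prod_(j < n.+1) (alpha j)`!)%:R
      / ((\sum_j alpha j + n.+1)`!)%:R.

Definition sigma (q : nat) (r : R) : R :=
  if `|r| <= pi / 2 then cos r ^+ (2 * q.+1) else 0.

Definition Ttilde (eps h : R) (phi : pt -> R) (L : nat) (bh : 'I_L -> pt)
  (M : seq simplex) : seq simplex :=
  [seq T <- M | [forall i : 'I_L, `|phi (qpoint T (bh i))| <= eps * acos (h / eps)]].

Definition Dh (Tt : seq simplex) : set pt := [set x | exists2 T, T \in Tt & shull T x].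

Definition affine_on (T : simplex) (v : pt -> R) :=
  forall lam : 'rV[R]_(n.+2), (forall k, 0 <= lam 0 k) -> \sum_k lam 0 k = 1 ->
    v (lam *m T) = \sum_k lam 0 k * v (vert T k).

Definition inVh (Tt : seq simplex) (v : pt -> R) := forall T, T \in Tt -> affine_on T v.

(* discrete forms; Ahat = A o phat, a0hat = a0 o phat, fhat = f o phat *)
Definition ah (q L : nat) (omega : 'I_L -> R) (bh : 'I_L -> pt) (eps : R)
  (phi : pt -> R) (Ahat : pt -> 'M[R]_(n.+1)) (a0hat : pt -> R)
  (Tt : seq simplex) (v1 v2 : pt -> R) : R :=
  eps^-1 * \sum_(T <- Tt)
    (svol T * \sum_(i < L) omega i *
       (let b := qpoint T (bh i) in
        let lam := bary (bh i) in
        let IA := \sum_(k < n.+2) lam 0 k *: Ahat (vert T k) in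
        let Ia0 := \sum_(k < n.+2) lam 0 k * a0hat (vert T k) in
        let g1 := agrad T (fun k => v1 (vert T k)) in
        let g2 := agrad T (fun k => v2 (vert T k)) in
        sigma q (phi b / eps) * dotv (g1 *m IA^T) g2
        + sigma q (phi b / eps) * Ia0 * v1 b * v2 b))
    * enorm (agrad T (fun k => phi (vert T k))).

Definition lh (q L : nat) (omega : 'I_L -> R) (bh : 'I_L -> pt) (eps : R)
  (phi : pt -> R) (fhat : pt -> R) (Tt : seq simplex) (v : pt -> R) : R :=
  eps^-1 * \sum_(T <- Tt)
    (svol T * \sum_(i < L) omega i *
       (let b := qpoint T (bh i) in
        let lam := bary (bh i) in
        let If := \sum_(k < n.+2) lam 0 k * fhat (vert T k) in
        sigma q (phi b / eps) * If * v b))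
    * enorm (agrad T (fun k => phi (vert T k))).

End FEM.

(* Main.v *)
Require Import Defs.
From HB Require Import structures.
From mathcomp Require Import all_boot all_order all_algebra.
From mathcomp Require Import all_classical all_reals all_analysis.
From mathcomp Require Import ring lra.
Set Implicit Arguments. Unset Strict Implicit. Unset Printing Implicit Defensive.
Import Order.TTheory GRing.Theory Num.Theory.
Import numFieldNormedType.Exports.
Local Open Scope classical_set_scope.
Local Open Scope ring_scope.

Section Abstract.
Variables (X : Type) (F : fieldType) (Vh : (X -> F) -> Prop)
  (a : (X -> F) -> (X -> F) -> F) (l : (X -> F) -> F) (N : nat)
  (E : (X -> F) -> 'rV[F]_N).

Definition lc (al : F) (g : X -> F) m (c : 'I_m -> F) (f : 'I_m -> X -> F) :=
  fun x => al * g x + \sum_(k < m) c k * f k x.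

Hypotheses
  (Vlc : forall al g m c f, Vh g -> (forall k, Vh (f k)) -> Vh (@lc al g m c f))
  (Vh0 : Vh (fun _ => 0))
  (alc1 : forall al g m c f v, Vh g -> (forall k, Vh (f k)) -> Vh v ->
     a (@lc al g m c f) v = al * a g v + \sum_k c k * a (f k) v)
  (alc2 : forall al g m c f u, Vh g -> (forall k, Vh (f k)) -> Vh u ->
     a u (@lc al g m c f) = al * a u g + \sum_k c k * a u (f k))
  (llc : forall al g m c f, Vh g -> (forall k, Vh (f k)) ->
     l (@lc al g m c f) = al * l g + \sum_k c k * l (f k))
  (Elc : forall al g m c f, Vh g -> (forall k, Vh (f k)) ->
     E (@lc al g m c f) = al *: E g + \sum_k c k *: E (f k))
  (Ez : forall w, Vh w -> E w = 0 -> (forall u, Vh u -> a u w = 0) /\ l w = 0)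
  (Pos : forall w, Vh w -> a w w = 0 -> E w = 0).

Definition Pfam m := exists f : 'I_m -> X -> F,
  (forall k, Vh (f k)) /\ row_free (\matrix_(k < m) E (f k)).

Lemma Pfam_le m : Pfam m -> (m <= N)%N.
Proof. by case=> f [_ /eqP <-]; apply: rank_leq_col. Qed.

Lemma Pfam0 : Pfam 0.
Proof.
exists (fun _ _ => 0); split; first by case.
by rewrite /row_free flatmx0 mxrank0.
Qed.

Lemma abstract_exists : exists u, Vh u /\ forall v, Vh v -> a u v = l v.
Proof.
have exP : exists m, `[< Pfam m >] by exists 0%N; apply/asboolP; exact: Pfam0.
have leP : forall m, `[< Pfam m >] -> (m <= N)%N by move=> j /asboolP; exact: Pfam_le.
have [m0 Pm0 maxm] : exists2 m0, Pfam m0 & forall j, Pfam j -> (j <= m0)%N.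
  case: (ex_maxnP exP leP) => m0 /asboolP Pm0 H; exists m0 => // j Pj.
  by apply: H; apply/asboolP.
case: Pm0 => f [Vf rf].
set M := \matrix_(k < m0) E (f k).
have rowM k : row k M = E (f k) by rewrite rowK.
have lc0 : forall c : 'rV_m0, E (lc 0 (fun _ => 0) (fun k => c 0 k) f) = c *m M.
  move=> c; rewrite Elc // scale0r add0r mulmx_sum_row.
  by apply: eq_bigr => k _; rewrite rowM.
have span : forall w, Vh w -> (E w <= M)%MS.
  move=> w Vw; apply/negPn/negP => nw.
  have : Pfam (1 + m0).
    exists (fun k => match fintype.split k with inl _ => w | inr j => f j end); split.
      by move=> k; case: (fintype.split k).
    have -> : \matrix_(k < 1 + m0) E (match fintype.split k with inl _ => w | inr j => f j end)
       = col_mx (E w) M.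
      apply/matrixP => i j; rewrite !mxE; case: (fintype.split i) => k; rewrite ?mxE ?(ord1 k) //.
    apply: inj_row_free => v.
    rewrite -[v]hsubmxK mul_row_col; move: (lsubmx v) (rsubmx v) => c1 c2 H.
    have c10 : c1 = 0.
      rewrite [c1]mx11_scalar; case: (eqVneq (c1 0 0) 0) => [->|nz]; first by rewrite raddf0.
      suff : (E w <= M)%MS by rewrite (negbTE nw).
      rewrite [c1]mx11_scalar mul_scalar_mx in H.
      have -> : E w = - (c1 0 0)^-1 *: (c2 *m M).
        have H' : c1 0 0 *: E w = - (c2 *m M) by apply/eqP; rewrite -addr_eq0 H.
        by rewrite -[E w](scalerK nz) H' scalerN scaleNr.
      by rewrite scalemx_sub // submxMl.
    move: H; rewrite c10 mul0mx add0r => H.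
    have c20 : c2 = 0 by apply: (row_free_inj rf); rewrite H mul0mx.
    by rewrite c20 row_mx0.
  by move/maxm; rewrite addnC addn1 ltnn.
pose G : 'M[F]_m0 := \matrix_(k, j) a (f k) (f j).
pose b : 'rV_m0 := \row_j l (f j).
have aU : forall c : 'rV_m0, forall j,
    a (lc 0 (fun _ => 0) (fun k => c 0 k) f) (f j) = (c *m G) 0 j.
  move=> c j; rewrite alc1 // mul0r add0r !mxE.
  by apply: eq_bigr => k _; rewrite mxE.
have Gu : G \in unitmx.
  rewrite -row_free_unit; apply: inj_row_free => c cG.
  set u := lc 0 (fun _ => 0) (fun k => c 0 k) f.
  have Vu : Vh u by apply: Vlc.
  have : a u u = 0.
    rewrite {2}/u alc2 // big1 ?addr0 ?mul0r //.
    by move=> k _; rewrite aU cG mxE mulr0.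
  move/(Pos Vu); rewrite /u lc0 => H.
  by apply: (row_free_inj rf); rewrite H mul0mx.
pose c := b *m invmx G.
set u := lc 0 (fun _ => 0) (fun k => c 0 k) f.
have Vu : Vh u by apply: Vlc.
exists u; split => // v Vv.
have [d Hd] := submxP (span v Vv).
set v' := lc 1 v (fun k => - d 0 k) f.
have Vv' : Vh v' by apply: Vlc.
have Ev' : E v' = 0.
  rewrite /v' Elc // scale1r Hd mulmx_sum_row -big_split big1 // => k _ /=.
  by rewrite rowM scaleNr subrr.
have [az lz] := Ez Vv' Ev'.
have := az u Vu; have := lz.
rewrite /v' alc2 // llc // !mul1r => Hl Ha.
have e : forall j, a u (f j) = l (f j).
  by move=> j; rewrite aU mulmxKV // mxE.
have S : (\sum_(k < m0) - d 0 k * a u (f k)) = \sum_(k < m0) - d 0 k * l (f k).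
  by apply: eq_bigr => k _; rewrite e.
by apply: (addIr (\sum_(k < m0) - d 0 k * l (f k))); rewrite Hl -S Ha.
Qed.
End Abstract.

Section Dot.
Variables (R : realType) (n : nat).
Implicit Types (u v w : pt R n).

Lemma dotvC u v : dotv u v = dotv v u.
Proof. by apply: eq_bigr => i _; rewrite mulrC. Qed.
Lemma dotvDl u v w : dotv (u + v) w = dotv u w + dotv v w.
Proof. by rewrite /dotv -big_split; apply: eq_bigr => i _; rewrite mxE mulrDl. Qed.
Lemma dotvZl (c : R) u w : dotv (c *: u) w = c * dotv u w.
Proof. by rewrite /dotv mulr_sumr; apply: eq_bigr => i _; rewrite mxE mulrA. Qed.
Lemma dotvDr u v w : dotv w (u + v) = dotv w u + dotv w v.
Proof. by rewrite dotvC dotvDl !(dotvC w). Qed.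
Lemma dotvZr (c : R) u w : dotv w (c *: u) = c * dotv w u.
Proof. by rewrite dotvC dotvZl dotvC. Qed.
Lemma dotv0l w : dotv 0 w = 0.
Proof. by rewrite -(scale0r 0) dotvZl mul0r. Qed.
Lemma dotv0r w : dotv w 0 = 0.
Proof. by rewrite dotvC dotv0l. Qed.
Lemma dotv_suml m (y : 'I_m -> pt R n) w : dotv (\sum_k y k) w = \sum_k dotv (y k) w.
Proof.
elim: m y => [|m IH] y; first by rewrite !big_ord0 dotv0l.
by rewrite !big_ord_recr /= dotvDl IH.
Qed.
Lemma dotv_sumr m (y : 'I_m -> pt R n) w : dotv w (\sum_k y k) = \sum_k dotv w (y k).
Proof. by rewrite dotvC dotv_suml; apply: eq_bigr => k _; rewrite dotvC. Qed.
Lemma dotv_ge0 u : 0 <= dotv u u.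
Proof. by apply: sumr_ge0 => i _; rewrite -expr2 sqr_ge0. Qed.
Lemma dotv_eq0 u : dotv u u = 0 -> u = 0.
Proof.
move=> H; apply/rowP => i; rewrite mxE.
have H2 := @psumr_eq0P _ _ predT (fun j => u 0 j ^+ 2) (fun j _ => sqr_ge0 _).
have : \sum_j u 0 j ^+ 2 = 0 by rewrite -[RHS]H; apply: eq_bigr => j _; rewrite expr2.
move/H2 => /(_ i isT) /eqP; rewrite sqrf_eq0 => /eqP //.
Qed.
End Dot.

Section Forms.
Variables (R : realType) (n : nat) (q L : nat) (omega : 'I_L -> R)
  (bh : 'I_L -> pt R n) (eps : R) (phi : pt R n -> R)
  (Ahat : pt R n -> 'M[R]_(n.+1)) (a0hat fhat : pt R n -> R)
  (Tt : seq (simplex R n)).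

Definition bq T i := qpoint T (bh i).
Definition IA T i := \sum_(k < n.+2) bary (bh i) 0 k *: Ahat (vert T k).
Definition Ia0 T i := \sum_(k < n.+2) bary (bh i) 0 k * a0hat (vert T k).
Definition If T i := \sum_(k < n.+2) bary (bh i) 0 k * fhat (vert T k).
Definition sg T i := sigma q (phi (bq T i) / eps).
Definition gr T (v : pt R n -> R) := agrad T (fun k => v (vert T k)).
Definition Yt T i (v1 v2 : pt R n -> R) :=
  sg T i * dotv (gr T v1 *m (IA T i)^T) (gr T v2)
  + sg T i * Ia0 T i * v1 (bq T i) * v2 (bq T i).
Definition Kt T i := eps^-1 * (svol T * omega i * enorm (agrad T (fun k => phi (vert T k)))).
Definition Kl T i := Kt T i * (sg T i * If T i).

Lemma ahE v1 v2 : ah q omega bh eps phi Ahat a0hat Tt v1 v2 =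
  \sum_(T <- Tt) \sum_(i < L) Kt T i * Yt T i v1 v2.
Proof.
rewrite /ah mulr_sumr; apply: eq_bigr => T _.
rewrite mulr_sumr mulr_suml mulr_sumr; apply: eq_bigr => i _.
rewrite /Kt /Yt /sg /bq /IA /Ia0 /gr /=.
ring.
Qed.

Lemma lhE v : lh q omega bh eps phi fhat Tt v =
  \sum_(T <- Tt) \sum_(i < L) Kl T i * v (bq T i).
Proof.
rewrite /lh mulr_sumr; apply: eq_bigr => T _.
rewrite mulr_sumr mulr_suml mulr_sumr; apply: eq_bigr => i _.
rewrite /Kl /Kt /sg /bq /If /=.
ring.
Qed.

Definition colv (vals : 'I_(n.+2) -> R) : 'cV[R]_(n.+1) :=
  \col_(i < n.+1) (vals (lift ord0 i) - vals ord0).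
Lemma agradE T vals : agrad T vals = (invmx (edges T) *m colv vals)^T.
Proof. by []. Qed.

Lemma colv_lc al (g : 'I_(n.+2) -> R) m (c : 'I_m -> R) (f : 'I_m -> 'I_(n.+2) -> R) :
  colv (fun k => al * g k + \sum_j c j * f j k) = al *: colv g + \sum_j c j *: colv (f j).
Proof.
apply/matrixP => i z; rewrite !mxE summxE.
under [in RHS]eq_bigr do rewrite !mxE.
under [in RHS]eq_bigr do rewrite mulrBr.
rewrite sumrB; ring.
Qed.

Lemma agrad_lc T al (g : 'I_(n.+2) -> R) m (c : 'I_m -> R) (f : 'I_m -> 'I_(n.+2) -> R) :
  agrad T (fun k => al * g k + \sum_j c j * f j k) = al *: agrad T g + \sum_j c j *: agrad T (f j).
Proof.
rewrite !agradE colv_lc mulmxDr mulmx_sumr linearD /= linear_sum /= -scalemxAr linearZ /=.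
by congr (_ + _); apply: eq_bigr => j _; rewrite -scalemxAr linearZ.
Qed.

Lemma sum_lin2 m (c : 'I_m -> R) (X Y : R) (A B : 'I_m -> R) :
  \sum_k c k * (X * A k + Y * B k) = X * \sum_k c k * A k + Y * \sum_k c k * B k.
Proof. by rewrite !mulr_sumr -big_split; apply: eq_bigr => k _ /=; ring. Qed.

Lemma sum_lin3 m (c : 'I_m -> R) (X Y Z : R) (A B : 'I_m -> R) :
  \sum_k c k * (X * A k + Y * B k * Z) = X * \sum_k c k * A k + Y * (\sum_k c k * B k) * Z.
Proof. by rewrite !mulr_sumr mulr_suml -big_split; apply: eq_bigr => k _ /=; ring. Qed.

Lemma gr_lc T al g m (c : 'I_m -> R) f :
  gr T (lc al g c f) = al *: gr T g + \sum_k c k *: gr T (f k).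
Proof. exact: (agrad_lc T al (fun k => g (vert T k)) c (fun j k => f j (vert T k))). Qed.

Lemma Yt_lc1 T i al g m (c : 'I_m -> R) f v :
  Yt T i (lc al g c f) v = al * Yt T i g v + \sum_k c k * Yt T i (f k) v.
Proof.
rewrite /Yt gr_lc mulmxDl mulmx_suml -scalemxAl dotvDl dotv_suml dotvZl.
under eq_bigr do rewrite -scalemxAl dotvZl.
rewrite sum_lin3 /lc; ring.
Qed.

Lemma Yt_lc2 T i al g m (c : 'I_m -> R) f u :
  Yt T i u (lc al g c f) = al * Yt T i u g + \sum_k c k * Yt T i u (f k).
Proof.
rewrite /Yt gr_lc dotvDr dotv_sumr dotvZr.
under eq_bigr do rewrite dotvZr.
rewrite sum_lin2 /lc; ring.
Qed.

Lemma lin_sum2 (r : seq (simplex R n)) (K Y0 : simplex R n -> 'I_L -> R) m (c : 'I_m -> R)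
  (Yk : 'I_m -> simplex R n -> 'I_L -> R) al :
  \sum_(T <- r) \sum_(i < L) K T i * (al * Y0 T i + \sum_k c k * Yk k T i) =
  al * (\sum_(T <- r) \sum_(i < L) K T i * Y0 T i)
  + \sum_k c k * (\sum_(T <- r) \sum_(i < L) K T i * Yk k T i).
Proof.
have E2 : \sum_k c k * (\sum_(T <- r) \sum_(i < L) K T i * Yk k T i) =
          \sum_(T <- r) \sum_(i < L) K T i * \sum_k c k * Yk k T i.
  under eq_bigr do rewrite mulr_sumr.
  rewrite exchange_big /=; apply: eq_bigr => T _.
  under eq_bigr do rewrite mulr_sumr.
  rewrite exchange_big /=; apply: eq_bigr => i _.
  by rewrite mulr_sumr; apply: eq_bigr => k _; ring.
rewrite E2 mulr_sumr -big_split; apply: eq_bigr => T _ /=.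
by rewrite mulr_sumr -big_split; apply: eq_bigr => i _ /=; ring.
Qed.

Lemma ah_lc1 al g m (c : 'I_m -> R) f v :
  ah q omega bh eps phi Ahat a0hat Tt (lc al g c f) v =
  al * ah q omega bh eps phi Ahat a0hat Tt g v
  + \sum_k c k * ah q omega bh eps phi Ahat a0hat Tt (f k) v.
Proof.
under eq_bigr do rewrite ahE; rewrite !ahE; have /= <- := lin_sum2 Tt Kt (fun T i => Yt T i g v) c (fun k T i => Yt T i (f k) v) al; apply: eq_bigr => T _; apply: eq_bigr => i _.
by rewrite Yt_lc1.
Qed.

Lemma ah_lc2 al g m (c : 'I_m -> R) f u :
  ah q omega bh eps phi Ahat a0hat Tt u (lc al g c f) =
  al * ah q omega bh eps phi Ahat a0hat Tt u g
  + \sum_k c k * ah q omega bh eps phi Ahat a0hat Tt u (f k).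
Proof.
under eq_bigr do rewrite ahE; rewrite !ahE; have /= <- := lin_sum2 Tt Kt (fun T i => Yt T i u g) c (fun k T i => Yt T i u (f k)) al; apply: eq_bigr => T _; apply: eq_bigr => i _.
by rewrite Yt_lc2.
Qed.

Lemma lh_lc al g m (c : 'I_m -> R) f :
  lh q omega bh eps phi fhat Tt (lc al g c f) =
  al * lh q omega bh eps phi fhat Tt g
  + \sum_k c k * lh q omega bh eps phi fhat Tt (f k).
Proof.
under eq_bigr do rewrite lhE; rewrite !lhE; have /= <- := lin_sum2 Tt Kl (fun T i => g (bq T i)) c (fun k T i => f k (bq T i)) al; apply: eq_bigr => T _; apply: eq_bigr => i _.
by [].
Qed.

Lemma bary_ok (b : pt R n) : ref_simplex b -> (forall k, 0 <= bary b 0 k) /\ \sum_k bary b 0 k = 1.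
Proof.
case=> b0 b1; split.
  move=> k; rewrite mxE; case: (unliftP ord0 k) => [j _|_] //.
  by rewrite subr_ge0.
rewrite big_ord_recl /bary mxE unlift_none.
under [X in _ + X = _]eq_bigr => i _ do rewrite mxE liftK.
by rewrite subrK.
Qed.

Lemma inVh0 : inVh Tt (fun _ => 0).
Proof. by move=> T _ lam _ _; rewrite big1 // => k _; rewrite mulr0. Qed.

Lemma inVh_lc al g m (c : 'I_m -> R) f :
  inVh Tt g -> (forall k, inVh Tt (f k)) -> inVh Tt (lc al g c f).
Proof.
move=> Vg Vf T TT lam h0 h1; rewrite /lc (Vg T TT lam h0 h1).
under [X in _ + X = _]eq_bigr => j _ do rewrite (Vf j T TT lam h0 h1).
rewrite mulr_sumr.
under [X in _ + X = _]eq_bigr => j _ do rewrite mulr_sumr.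
rewrite exchange_big /= -big_split; apply: eq_bigr => k _ /=.
rewrite mulrDr mulr_sumr; congr (_ + _); first by ring.
by apply: eq_bigr => j _; ring.
Qed.

Definition Ev (v : pt R n -> R) : 'rV[R]_(size Tt * n.+2) :=
  mxvec (\matrix_(j < size Tt, k < n.+2) v (vert (nth 0 Tt j) k)).

Lemma Ev_lc al g m (c : 'I_m -> R) f :
  Ev (lc al g c f) = al *: Ev g + \sum_k c k *: Ev (f k).
Proof.
rewrite /Ev.
have -> : \matrix_(j < size Tt, k < n.+2) lc al g c f (vert (nth 0 Tt j) k) =
  al *: \matrix_(j < size Tt, k < n.+2) g (vert (nth 0 Tt j) k) +
  \sum_i c i *: \matrix_(j < size Tt, k < n.+2) f i (vert (nth 0 Tt j) k).
  apply/matrixP => j k; rewrite !mxE summxE /lc; congr (_ + _).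
  by apply: eq_bigr => i _; rewrite !mxE.
rewrite linearD linearZ linear_sum /=; congr (_ + _).
by apply: eq_bigr => i _; rewrite linearZ.
Qed.

Lemma Ev0P v : Ev v = 0 <-> forall T, T \in Tt -> forall k, v (vert T k) = 0.
Proof.
split.
  move=> /eqP; rewrite mxvec_eq0 => /eqP H T TT k.
  have iT : (index T Tt < size Tt)%N by rewrite index_mem.
  have := congr1 (fun M : 'M[R]_(size Tt, n.+2) => M (Ordinal iT) k) H.
  by rewrite !mxE /= nth_index.
move=> H; apply/eqP; rewrite mxvec_eq0; apply/eqP/matrixP => j k; rewrite !mxE.
by apply: H; rewrite mem_nth.
Qed.

Lemma gr_vanish T v : (forall k, v (vert T k) = 0) -> gr T v = 0.
Proof.
move=> H; rewrite /gr agradE.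
have -> : colv (fun k => v (vert T k)) = 0.
  by apply/matrixP => i j; rewrite !mxE !H subrr.
by rewrite mulmx0 trmx0.
Qed.

Hypothesis Hbh : forall i, ref_simplex (bh i).

Lemma vanish_bq T i v : inVh Tt v -> T \in Tt -> (forall k, v (vert T k) = 0) ->
  v (bq T i) = 0.
Proof.
move=> Vv TT H; have [h0 h1] := bary_ok (Hbh i).
rewrite /bq /qpoint (Vv T TT _ h0 h1) big1 // => k _; by rewrite H mulr0.
Qed.

Lemma Ez_gen w : inVh Tt w -> (forall T, T \in Tt -> forall k, w (vert T k) = 0) ->
  (forall u, ah q omega bh eps phi Ahat a0hat Tt u w = 0) /\
  lh q omega bh eps phi fhat Tt w = 0.
Proof.
move=> Vw H; split.
  move=> u; rewrite ahE big1_seq // => T /andP [_ TT]; rewrite big1 // => i _.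
  by rewrite /Yt (gr_vanish (H T TT)) dotv0r (vanish_bq i Vw TT (H T TT)) !mulr0 addr0 mulr0.
rewrite lhE big1_seq // => T /andP [_ TT]; rewrite big1 // => i _.
by rewrite (vanish_bq i Vw TT (H T TT)) mulr0.
Qed.

Lemma pos_gen (beta al0 : R) : 0 < beta -> 0 < al0 -> (0 < L)%N ->
  (forall T, T \in Tt -> nondeg T) ->
  (forall T i, T \in Tt -> 0 < Kt T i) ->
  (forall T i, T \in Tt -> 0 < sg T i) ->
  (forall T i, T \in Tt -> al0 <= Ia0 T i) ->
  (forall T i g, T \in Tt -> beta * dotv g g <= dotv (g *m (IA T i)^T) g) ->
  forall w, inVh Tt w -> ah q omega bh eps phi Ahat a0hat Tt w w = 0 ->
  forall T, T \in Tt -> forall k, w (vert T k) = 0.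
Proof.
move=> hb ha hL Hnd HK Hs Ha HQ w Vw.
have P1 : forall T i, T \in Tt -> 0 <= sg T i * dotv (gr T w *m (IA T i)^T) (gr T w).
  move=> T i TT; apply: mulr_ge0; first exact: ltW (Hs T i TT).
  apply: le_trans (HQ T i _ TT); apply: mulr_ge0; [exact: ltW | exact: dotv_ge0].
have P2 : forall T i, T \in Tt -> 0 <= sg T i * Ia0 T i * w (bq T i) * w (bq T i).
  move=> T i TT; rewrite -mulrA; apply: mulr_ge0; last by rewrite -expr2 sqr_ge0.
  apply: mulr_ge0; [exact: ltW (Hs T i TT) | exact: le_trans (ltW ha) (Ha T i TT)].
have Ynn : forall T i, T \in Tt -> 0 <= Yt T i w w.
  by move=> T i TT; rewrite /Yt; apply: addr_ge0; [exact: P1 | exact: P2].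
rewrite ahE => H0 T TT.
have HT : \sum_(i < L) Kt T i * Yt T i w w = 0.
  move: H0; rewrite big_seq => /eqP; rewrite psumr_eq0 => [/allP /(_ T TT)|T' TT'].
    by rewrite TT /= => /eqP.
  by apply: sumr_ge0 => i _; apply: mulr_ge0; [exact: ltW (HK T' i TT') | exact: Ynn].
have Y0 : forall i, Yt T i w w = 0.
  move=> i.
  have := @psumr_eq0P _ _ predT (fun i => Kt T i * Yt T i w w)
     (fun i _ => mulr_ge0 (ltW (HK T i TT)) (Ynn T i TT)) HT i isT.
  by move/eqP; rewrite mulf_eq0 (gt_eqF (HK T i TT)) /= => /eqP.
pose i0 := Ordinal hL.
have := Y0 i0; rewrite /Yt => /eqP; rewrite (paddr_eq0 (P1 T i0 TT) (P2 T i0 TT)).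
move=> /andP [/eqP HQ0 /eqP Hb0].
have sne : sg T i0 != 0 by rewrite gt_eqF // Hs.
have ane : Ia0 T i0 != 0 by rewrite gt_eqF //; exact: lt_le_trans ha (Ha T i0 TT).
have gz : gr T w = 0.
  apply: dotv_eq0; apply/le_anti/andP; split; last exact: dotv_ge0.
  have : dotv (gr T w *m (IA T i0)^T) (gr T w) = 0.
    by move/eqP: HQ0; rewrite mulf_eq0 (negbTE sne) /= => /eqP.
  move=> Hq; have := HQ T i0 (gr T w) TT; rewrite Hq pmulr_rle0 //.
have wb0 : w (bq T i0) = 0.
  by move/eqP: Hb0; rewrite !mulf_eq0 (negbTE sne) (negbTE ane) /= orbb => /eqP.
have Eu : edges T \in unitmx by rewrite unitmxE unitfE; exact: Hnd.
have cz : colv (fun k => w (vert T k)) = 0.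
  have H1 : invmx (edges T) *m colv (fun k => w (vert T k)) = 0.
    by rewrite -[LHS]trmxK -agradE; move: gz; rewrite /gr => ->; rewrite trmx0.
  by rewrite -(mulKVmx Eu (colv (fun k => w (vert T k)))) H1 mulmx0.
have eqv : forall k, w (vert T k) = w (vert T ord0).
  move=> k; case: (unliftP ord0 k) => [j ->|-> //].
  have := congr1 (fun M : 'cV[R]_(n.+1) => M j 0) cz.
  by rewrite !mxE => /eqP; rewrite subr_eq0 => /eqP.
have [h0 h1] := bary_ok (Hbh i0).
have : w (vert T ord0) = 0.
  rewrite -wb0 /bq /qpoint (Vw T TT _ h0 h1).
  under eq_bigr do rewrite eqv.
  by rewrite -mulr_suml h1 mul1r.
by move=> H k; rewrite eqv.
Qed.

End Forms.

Lemma sigma_pos (R : realType) (q : nat) (x eps h : R) :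
  0 < h -> h < eps -> `|x| <= eps * acos (h / eps) -> 0 < sigma q (x / eps).
Proof.
move=> h0 heps hx.
have e0 : 0 < eps by apply: lt_trans heps.
have hr0 : 0 < h / eps by apply: divr_gt0.
have hr1 : h / eps < 1 by rewrite ltr_pdivrMr // mul1r.
have hrange : -1 <= h / eps <= 1.
  by apply/andP; split; [apply: le_trans (ltW hr0); rewrite lerN10 | exact: ltW].
have [/andP [t0 tpi] ct] := acos_def hrange.
set t := acos (h / eps) in t0 tpi ct hx.
have tlt : t < pi / 2.
  rewrite ltNge; apply/negP => ht.
  have pi0 : 0 < pi :> R := pi_gt0 R.
  have hpi : (pi : R) / 2 \in `[0, pi]%R.
    by rewrite in_itv /= divr_ge0 ?ler_pdivrMr ?ltW // ltr_pMr // ltr1n.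
  have htin : t \in `[0, pi]%R by rewrite in_itv /= t0 tpi.
  move: ht; rewrite le_eqVlt => /orP [/eqP e|lt].
    by move: hr0; rewrite -ct -e cos_pihalf ltxx.
  have := ltr_cos hpi htin; rewrite lt cos_pihalf ct => H.
  have H' : h / eps < 0 by rewrite H.
  by rewrite ltNge (ltW H') in hr0.
have xe : `|x / eps| < pi / 2.
  rewrite normrM normfV (gtr0_norm e0); apply: le_lt_trans tlt.
  by rewrite ler_pdivrMr // mulrC.
rewrite /sigma (ltW xe); apply: exprn_gt0; apply: cos_gt0_pihalf.
by rewrite -ltr_norml.
Qed.

Lemma quadA (R : realType) n (A : 'M[R]_(n.+1)) (G : pt R n) (al : R) :
  0 < al -> 0 < enorm G -> A^T = A ->
  (forall xi : pt R n, dotv xi G = 0 -> dotv (xi *m A) ((enorm G)^-1 *: G) = 0) ->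
  (forall xi : pt R n, dotv xi G = 0 -> dotv (xi *m A) xi >= al * dotv xi xi) ->
  ((enorm G)^-1 *: G) *m A^T = (enorm G)^-1 *: G ->
  forall g, Num.min al 1 * dotv g g <= dotv (g *m A) g.
Proof.
move=> ha hc As At Ae An g.
have cne : enorm G != 0 by rewrite gt_eqF.
have GG : dotv G G = enorm G ^+ 2 by rewrite /enorm sqr_sqrtr // dotv_ge0.
move: At An GG cne; move: (enorm G) => c At An GG cne.
have [nu Enu] : exists nu, nu = c^-1 *: G by exists (c^-1 *: G).
rewrite -Enu in At An.
have nn : dotv nu nu = 1.
  by rewrite Enu dotvZl dotvZr GG mulrA -expr2 -exprMn mulVf // expr1n.
have An' : nu *m A = nu by move: An; rewrite As.
have [t Et] : exists t, t = dotv g nu by exists (dotv g nu).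
have [xi Exi] : exists xi, xi = g - t *: nu by exists (g - t *: nu).
have xnu : dotv xi nu = 0 by rewrite Exi -scaleNr dotvDl dotvZl nn mulr1 Et subrr.
have Gnu : G = c *: nu by rewrite Enu scalerA mulfV // scale1r.
have xG : dotv xi G = 0 by rewrite Gnu dotvZr xnu mulr0.
have gdec : g = xi + t *: nu by rewrite Exi subrK.
have At' : dotv (xi *m A) nu = 0 := At xi xG.
have quad : dotv (g *m A) g = dotv (xi *m A) xi + t ^+ 2.
  rewrite gdec mulmxDl -scalemxAl An' !dotvDl !dotvDr !dotvZl !dotvZr At'.
  rewrite (dotvC nu xi) xnu nn; ring.
have gg : dotv g g = dotv xi xi + t ^+ 2.
  rewrite gdec !dotvDl !dotvDr !dotvZl !dotvZr (dotvC nu xi) xnu nn; ring.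
rewrite quad gg mulrDr; apply: lerD.
  apply: le_trans (Ae xi xG); apply: ler_wpM2r; first exact: dotv_ge0.
  by rewrite ge_min lexx.
rewrite -[leRHS]mul1r; apply: ler_wpM2r; first exact: sqr_ge0.
by rewrite ge_min lexx orbT.
Qed.

Theorem mainTheorem2
  (R : realType) (n : nat) (Hn : n = 1%N \/ n = 2%N)
  (* domain, level set function, hypersurface *)
  (Omega : set (pt R n)) (phi : pt R n -> R) (c0 c1 : R) (Gamma : set (pt R n))
  (HOopen : open Omega) (HObdd : bounded_set Omega)
  (HGamma : Gamma = [set x | closure Omega x /\ phi x = 0])
  (HGsub : Gamma `<=` Omega) (HGne : Gamma !=set0) (HGconn : connected Gamma)
  (Hphi : exists U : set (pt R n), open U /\ closure Omega `<=` U /\ smooth_on U phi)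
  (Hc0 : 0 < c0) (Hc01 : c0 <= c1)
  (Hgrad : forall x, closure Omega x ->
     c0 <= enorm (grad phi x) /\ enorm (grad phi x) <= c1)
  (* closest point projection, defined on closure Omega *)
  (phat : pt R n -> pt R n)
  (Hphat : forall x, closure Omega x ->
     Gamma (phat x) /\
     (forall y, Gamma y -> enorm (x - phat x) <= enorm (x - y)) /\
     (forall y, Gamma y -> enorm (x - y) <= enorm (x - phat x) -> y = phat x))
  (* coefficients; nu = grad phi / |grad phi| (the sign of nu is irrelevant) *)
  (A : pt R n -> 'M[R]_(n.+1)) (a0 f : pt R n -> R) (alpha alpha0 : R)
  (HAreg : forall i j, Ck_on_set 2 Gamma (fun x => A x i j))
  (HAsym : forall x, Gamma x -> (A x)^T = A x)
  (HAtan : forall x, Gamma x -> forall xi : pt R n, dotv xi (grad phi x) = 0 ->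
     dotv (xi *m A x) ((enorm (grad phi x))^-1 *: grad phi x) = 0)
  (Halpha : 0 < alpha)
  (HAell : forall x, Gamma x -> forall xi : pt R n, dotv xi (grad phi x) = 0 ->
     dotv (xi *m A x) xi >= alpha * dotv xi xi)
  (HAnu : forall x, Gamma x ->
     ((enorm (grad phi x))^-1 *: grad phi x) *m (A x)^T
       = (enorm (grad phi x))^-1 *: grad phi x)
  (Ha0reg : lipschitz_set Gamma a0) (Hfreg : lipschitz_set Gamma f)
  (Halpha0 : 0 < alpha0) (Ha0 : forall x, Gamma x -> alpha0 <= a0 x)
  (* delta and the flow gamma_p *)
  (delta : R) (gamma : pt R n -> R -> pt R n)
  (Hdelta : 0 < delta)
  (Hflow : forall p, Gamma p ->
     let F := fun y : pt R n =>
       (dotv (grad phi y *m (A p)^T) (grad phi y))^-1 *: (grad phi y *m (A p)^T) in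
     gamma p 0 = p /\
     (forall s, `|s| < delta -> derivable (gamma p) s 1 /\
                 'D_1 (gamma p) s = F (gamma p s)) /\
     (forall y : R -> pt R n, y 0 = p ->
        (forall s, `|s| < delta -> derivable y s 1 /\ 'D_1 y s = F (y s)) ->
        forall s, `|s| < delta -> y s = gamma p s))
  (Hbij : (forall p s, Gamma p -> `|s| < delta ->
             Omega (gamma p s) /\ `|phi (gamma p s)| < delta) /\
          (forall p s p' s', Gamma p -> `|s| < delta -> Gamma p' -> `|s'| < delta ->
             gamma p s = gamma p' s' -> p = p' /\ s = s') /\
          (forall x, Omega x -> `|phi x| < delta ->
             exists p s, Gamma p /\ `|s| < delta /\ gamma p s = x))
  (* quadrature rule *)
  (q L : nat) (omega : 'I_L -> R) (bh : 'I_L -> pt R n)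
  (Homega : forall i, 0 < omega i) (Homega1 : \sum_(i < L) omega i = 1)
  (Hbh : forall i, ref_simplex (bh i))
  (Hexact : quad_exact q omega bh)
  (* family of regular meshes and h0 *)
  (Th : R -> seq (simplex R n)) (h0 : R) (Hh0 : 0 < h0)
  (Hmesh : forall h, 0 < h <= h0 ->
     partition_of (closure Omega) (Th h) /\ meshsize (Th h) = h)
  (Hregular : exists kappa : R, 0 < kappa /\ forall h, 0 < h <= h0 ->
     forall T, T \in Th h -> sdiam T ^+ n.+1 <= kappa * svol T)
  (HIhphi : forall h, 0 < h <= h0 -> forall T, T \in Th h ->
     c0 / 2 <= enorm (agrad T (fun k => phi (vert T k))) /\
     enorm (agrad T (fun k => phi (vert T k))) <= 2 * c1) :
  forall eps h : R, 0 < h -> h < eps -> h <= h0 -> (pi / 2 + c1) * eps < delta ->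
    let Tt := Ttilde eps h phi bh (Th h) in
    let a := ah q omega bh eps phi (A \o phat) (a0 \o phat) Tt in
    let l := lh q omega bh eps phi (f \o phat) Tt in
    (exists u, inVh Tt u /\ forall v, inVh Tt v -> a u v = l v) /\
    (forall u1 u2, inVh Tt u1 -> inVh Tt u2 ->
       (forall v, inVh Tt v -> a u1 v = l v) ->
       (forall v, inVh Tt v -> a u2 v = l v) ->
       forall x, Dh Tt x -> u1 x = u2 x).
Proof.
move=> eps h hpos heps hh0 hdelta Tt a l.
have hh : 0 < h <= h0 by rewrite hpos hh0.
have [[Hnd [Hcov _]] _] := Hmesh h hh.
have TTh : forall T, T \in Tt -> T \in Th h by move=> T; rewrite mem_filter => /andP [].
have TTf : forall T, T \in Tt -> forall i,
    `|phi (qpoint T (bh i))| <= eps * acos (h / eps).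
  by move=> T; rewrite mem_filter => /andP [/forallP H _] i; apply: H.
have vc : forall T, T \in Tt -> forall k, closure Omega (vert T k).
  move=> T TT k; apply/(Hcov _).2; exists T; first exact: TTh.
  exists (delta_mx 0 k); split; [|split].
  - by move=> j; rewrite mxE ler0n.
  - rewrite (bigD1 k) //= big1 ?addr0 ?mxE ?eqxx //.
    by move=> j /negbTE jk; rewrite mxE jk andbF.
  - by rewrite -rowE.
have GC : forall p, Gamma p -> closure Omega p by move=> p; rewrite HGamma => -[].
have Gp : forall T, T \in Tt -> forall k, Gamma (phat (vert T k)).
  by move=> T TT k; exact: (Hphat _ (vc T TT k)).1.
have hL : (0 < L)%N.
  rewrite lt0n; apply/negP => /eqP L0.
  have : \sum_(i < L) omega i = 0 by rewrite big1 // => -[j Hj] _; have : (j < 0)%N by rewrite -L0.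
  by rewrite Homega1 => /eqP; rewrite oner_eq0.
have e0 : 0 < eps by apply: lt_trans heps.
have hbeta : 0 < Num.min alpha 1 by rewrite lt_min Halpha ltr01.
have Pos := @pos_gen R n q L omega bh eps phi (A \o phat) (a0 \o phat) Tt Hbh
  (Num.min alpha 1) alpha0 hbeta Halpha0 hL.
have Pos' : forall w, inVh Tt w -> a w w = 0 -> forall T, T \in Tt -> forall k, w (vert T k) = 0.
  apply: Pos.
  - by move=> T TT; apply: Hnd; exact: TTh.
  - move=> T i TT; rewrite /Kt; apply: mulr_gt0; first by rewrite invr_gt0.
    apply: mulr_gt0; first apply: mulr_gt0 => //.
      rewrite /svol; apply: divr_gt0; last by rewrite ltr0n fact_gt0.
      by rewrite normr_gt0; apply: Hnd; exact: TTh.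
    have [H1 _] := HIhphi h hh T (TTh T TT).
    by apply: lt_le_trans H1; apply: divr_gt0.
  - by move=> T i TT; apply: (sigma_pos q hpos heps); exact: TTf.
  - move=> T i TT; have [b0 b1] := bary_ok (Hbh i).
    rewrite /Ia0; apply: (@le_trans _ _ (\sum_k bary (bh i) 0 k * alpha0)).
      by rewrite -mulr_suml b1 mul1r.
    by apply: ler_sum => k _; apply: ler_wpM2l => //; apply: Ha0; exact: Gp.
  - move=> T i g TT; have [b0 b1] := bary_ok (Hbh i).
    rewrite /IA linear_sum mulmx_sumr dotv_suml.
    apply: (@le_trans _ _ (\sum_k bary (bh i) 0 k * (Num.min alpha 1 * dotv g g))).
      by rewrite -mulr_suml b1 mul1r.
    apply: ler_sum => k _; rewrite linearZ /= -scalemxAr dotvZl.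
    apply: ler_wpM2l => //.
    have G := Gp T TT k; rewrite /= (HAsym _ G).
    apply: quadA => //.
    + by apply: lt_le_trans Hc0 _; exact: (Hgrad _ (GC _ G)).1.
    + exact: HAsym.
    + exact: HAtan.
    + exact: HAell.
    + exact: HAnu.
have Ez : forall w, inVh Tt w -> Ev Tt w = 0 -> (forall u, inVh Tt u -> a u w = 0) /\ l w = 0.
  move=> w Vw /Ev0P H.
  have [H1 H2] := Ez_gen q omega eps phi (A \o phat) (a0 \o phat) (f \o phat) Hbh Vw H.
  by split => // u _; apply: H1.
split.
  apply: (@abstract_exists _ _ (inVh Tt) a l _ (Ev Tt)).
  - by move=> al g m c f' Vg Vf; apply: inVh_lc.
  - exact: inVh0.
  - by move=> *; apply: ah_lc1.
  - by move=> *; apply: ah_lc2.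
  - by move=> *; apply: lh_lc.
  - by move=> *; apply: Ev_lc.
  - exact: Ez.
  - by move=> w Vw H; apply/Ev0P; apply: Pos'.
move=> u1 u2 V1 V2 H1 H2 x [T TT [lam [hl0 [hl1 ->]]]].
pose w := lc 1 u1 (fun _ : 'I_1 => -1) (fun _ => u2).
have Vw : inVh Tt w by apply: inVh_lc.
have aw : forall v, inVh Tt v -> a w v = 0.
  move=> v Vv; rewrite /a ah_lc1 big_ord1 -/a H1 // H2 //; ring.
have := Pos' w Vw (aw w Vw) T TT.
move=> Hv; have := Vw T TT lam hl0 hl1.
rewrite big1 => [|k _]; last by rewrite Hv mulr0.
by rewrite /w /lc big_ord1 mul1r mulN1r => /eqP; rewrite subr_eq0 => /eqP.
Qed.
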